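(* For each $n\geq1$ let $\mathcal P_n$ be a polytope in $\mathbb R^k$ with $\mathcal P_{n+1}\subseteq\mathcal P_n$ for all $n$. Let $\mathcal P:=\bigcap_n\mathcal P_n$ and let $p$ be an extreme point of $\mathcal P$. Then for each $n$ there exists a vertex $p_n$ of $\mathcal P_n$ such that $\lim_{n\to\infty}p_n=p$.
   Context: A polytope is the convex hull of finitely many points of $\mathbb R^k$; its vertices are its extreme points. *)

(* Defs.v *)
(* R : realType, points of R^k are row vectors 'rV[R]_k
   with the canonical (product/sup-norm) topology on matrices. *)
From HB Require Import structures.
From mathcomp Require Import all_boot all_order all_algebra.
From mathcomp Require Import all_classical all_reals all_analysis.
Set Implicit Arguments. Unset Strict Implicit. Unset Printing Implicit Defensive.
Import Order.TTheory GRing.Theory Num.Theory.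
Import numFieldNormedType.Exports.
Local Open Scope classical_set_scope.
Local Open Scope ring_scope.

Definition conv_hull (R : realType) (k : nat) (S : seq 'rV[R]_k) : set 'rV[R]_k :=
  [set x | exists w : 'I_(size S) -> R,
      (forall i, 0 <= w i) /\ \sum_(i < size S) w i = 1 /\
      x = \sum_(i < size S) w i *: S`_(nat_of_ord i)].

Definition is_polytope (R : realType) (k : nat) (A : set 'rV[R]_k) : Prop :=
  exists S : seq 'rV[R]_k, A = conv_hull S.

Definition extreme_point (R : realType) (k : nat) (A : set 'rV[R]_k) (x : 'rV[R]_k) : Prop :=
  A x /\ forall y z t, A y -> A z -> 0 < t < 1 -> x = t *: y + (1 - t) *: z -> y = z.

(* Main.v *)
Require Import Defs.
From HB Require Import structures.
From mathcomp Require Import all_boot all_order all_algebra.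
From mathcomp Require Import all_classical all_reals all_analysis.
From mathcomp Require Import ring lra.
Import Order.TTheory GRing.Theory Num.Theory.
Import numFieldNormedType.Exports.
Local Open Scope classical_set_scope.
Local Open Scope ring_scope.
Set Implicit Arguments. Unset Strict Implicit. Unset Printing Implicit Defensive.
Section Convex.
Variables (R : realType) (k : nat).
Local Notation V := 'rV[R]_k.

Definition cvx (C : set V) := forall x y t, C x -> C y -> 0 <= t <= 1 ->
  C (t *: x + (1 - t) *: y).

Lemma convex_comb (C : set V) (I : eqType) (r : seq I) (P : pred I)
  (w : I -> R) (y : I -> V) : cvx C ->
  (forall i, P i -> 0 <= w i) -> (forall i, P i -> C (y i)) ->
  \sum_(i <- r | P i) w i = 1 -> C (\sum_(i <- r | P i) w i *: y i).
Proof.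
move=> hC; elim: r w => [|a r IH] w w0 hy.
  by rewrite big_nil => /esym/eqP; rewrite oner_eq0.
rewrite !big_cons; case: ifP => Pa; last exact: IH.
set s := \sum_(i <- r | P i) w i => hs.
have s0 : 0 <= s by apply: sumr_ge0.
have [s00|sn0] := eqVneq s 0.
  have hw : w a = 1 by rewrite -hs s00 addr0.
  have -> : \sum_(i <- r | P i) w i *: y i = 0.
    rewrite big1_seq // => i /andP [Pi ir].
    have : all (fun i => P i ==> (w i == 0)) r by rewrite -psumr_eq0 // -/s s00.
    by move/allP/(_ i ir); rewrite Pi /= => /eqP ->; rewrite scale0r.
  by rewrite hw scale1r addr0; apply: hy.
have hwa : w a = 1 - s by rewrite -hs addrK.
have -> : \sum_(i <- r | P i) w i *: y i =
    (1 - w a) *: \sum_(i <- r | P i) (w i / s) *: y i.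
  rewrite hwa opprB addrCA subrr addr0 scaler_sumr; apply: eq_bigr => i _.
  by rewrite scalerA mulrCA divff // mulr1.
apply: hC; [exact: hy| |].
  apply: IH => [i Pi|i Pi|]; first by rewrite divr_ge0 // w0.
    exact: hy.
  by rewrite -mulr_suml divff.
by rewrite w0 //= hwa lerBlDr lerDl.
Qed.

Lemma conv_hull_convex (S : seq V) : cvx (conv_hull S).
Proof.
move=> x y t [a [a0 [a1 ->]]] [b [b0 [b1 ->]]] /andP[t0 t1].
exists (fun i => t * a i + (1 - t) * b i); split; [|split].
- by move=> i; rewrite addr_ge0 // mulr_ge0 // ?subr_ge0.
- by rewrite big_split /= -!mulr_sumr a1 b1 !mulr1 addrCA subrr addr0.
- rewrite !scaler_sumr -big_split /=; apply: eq_bigr => i _.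
  by rewrite [in RHS]scalerDl !scalerA.
Qed.

Lemma conv_hull_mem (S : seq V) x : x \in S -> conv_hull S x.
Proof.
move=> xS; have iS : (index x S < size S)%N by rewrite index_mem.
pose i0 : 'I_(size S) := Ordinal iS.
exists (fun i => (i == i0)%:R); split; [|split].
- by move=> i; rewrite ler0n.
- rewrite (bigD1 i0) //= eqxx big1 ?addr0 // => i /negbTE ->; done.
- rewrite (bigD1 i0) //= eqxx scale1r big1 ?addr0 ?nth_index //.
  by move=> i /negbTE ->; rewrite scale0r.
Qed.

Lemma conv_hull_min (S : seq V) (C : set V) : cvx C ->
  (forall x, x \in S -> C x) -> conv_hull S `<=` C.
Proof.
move=> hC hS x [w [w0 [w1 ->]]].
apply: (@convex_comb C _ _ predT) => // i _; exact/hS/mem_nth.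
Qed.

End Convex.
Section KM.
Variables (R : realType) (k : nat).
Local Notation V := 'rV[R]_k.

Lemma conv_hull_eq (S T : seq V) : (forall x, x \in S -> conv_hull T x) ->
  (forall x, x \in T -> conv_hull S x) -> conv_hull S = conv_hull T.
Proof.
move=> hST hTS; rewrite eqEsubset; split; apply: conv_hull_min => //;
  exact: conv_hull_convex.
Qed.

Lemma conv_cons (s : V) (S : seq V) y : conv_hull (s :: S) y ->
  exists a0 (a : 'I_(size S) -> R), [/\ 0 <= a0, (forall i, 0 <= a i),
   a0 + \sum_i a i = 1 & y = a0 *: s + \sum_i a i *: S`_i].
Proof.
move=> [w [w0 [w1 ->]]]; exists (w ord0), (fun i => w (lift ord0 i)).
split => //; first by rewrite -w1 big_ord_recl.
by rewrite big_ord_recl.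
Qed.

Lemma extreme_step (S : seq V) (s : V) : s \in S ->
  ~ conv_hull (rem s S) s -> extreme_point (conv_hull S) s.
Proof.
move=> sS hno; split; first exact: conv_hull_mem.
have -> : conv_hull S = conv_hull (s :: rem s S).
  by apply: conv_hull_eq => x xS; apply: conv_hull_mem;
    rewrite ?(perm_mem (perm_to_rem sS)) // -(perm_mem (perm_to_rem sS)).
set S' := rem s S.
move=> y z t /conv_cons [a0 [a [a00 a0i a1 ->]]] /conv_cons [b0 [b [b00 b0i b1 ->]]].
move=> /andP[t0 t1] hs.
set A := \sum_i a i *: S'`_i in hs *; set B := \sum_i b i *: S'`_i in hs *.
set c := t * a0 + (1 - t) * b0.
have sa : 0 <= \sum_i a i by apply: sumr_ge0.
have sb : 0 <= \sum_i b i by apply: sumr_ge0.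
have hc : (1 - c) *: s = t *: A + (1 - t) *: B.
  rewrite scalerBl scale1r {1}hs /c [(t * a0 + _) *: s]scalerDl !scalerDr !scalerA.
  by rewrite addrACA [X in X - _]addrC addrK.
have a0l : a0 <= 1 by rewrite -a1 lerDl.
have b0l : b0 <= 1 by rewrite -b1 lerDl.
have hc1 : 1 - c = t * \sum_i a i + (1 - t) * \sum_i b i.
  have -> : \sum_i a i = 1 - a0 by rewrite -a1 addrAC subrr add0r.
  have -> : \sum_i b i = 1 - b0 by rewrite -b1 addrAC subrr add0r.
  by rewrite /c; ring.
have [clt|cge] := ltP c 1.
  exfalso; apply: hno.
  have c0 : 1 - c != 0 by rewrite subr_eq0 eq_sym lt_eqF.
  exists (fun i => (t * a i + (1 - t) * b i) / (1 - c)); split; [|split].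
  - move=> i; rewrite divr_ge0 ?subr_ge0 ?(ltW clt) //.
    by rewrite addr_ge0 // mulr_ge0 ?subr_ge0 ?a0i ?b0i ?(ltW t0) ?(ltW t1).
  - by rewrite -mulr_suml big_split /= -!mulr_sumr -hc1 divff.
  - have e : s = (1 - c)^-1 *: ((1 - c) *: s) by rewrite scalerA mulVf // scale1r.
    rewrite {1}e.
    rewrite hc scaler_sumr /A /B !scaler_sumr -big_split scaler_sumr.
    apply: eq_bigr => i _ /=; rewrite !scalerA -scalerDl -scalerA.
    by rewrite !scalerA mulrC.
have ha0 : a0 = 1 by nra.
have hb0 : b0 = 1 by nra.
have hA : A = 0.
  rewrite /A big1 // => i _.
  have : \sum_i a i = 0 by lra.
  by move/psumr_eq0P => /(_ (fun i _ => a0i i) i isT) ->; rewrite scale0r.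
have hB : B = 0.
  rewrite /B big1 // => i _.
  have : \sum_i b i = 0 by lra.
  by move/psumr_eq0P => /(_ (fun i _ => b0i i) i isT) ->; rewrite scale0r.
by rewrite hA hB ha0 hb0.
Qed.

End KM.
Section KM2.
Variables (R : realType) (k : nat).
Local Notation V := 'rV[R]_k.

Lemma krein_milman (S : seq V) : exists T : seq V,
  conv_hull T = conv_hull S /\ forall t, t \in T -> extreme_point (conv_hull T) t.
Proof.
move: {2}(size S) (leqnn (size S)) => n; elim: n S => [|n IH] S hS.
  exists S; split => // t; by case: S hS.
have [[s sS hs]|hno] := pselect (exists2 s, s \in S & conv_hull (rem s S) s).
  have [|T [hT hTe]] := IH (rem s S).
    have s0 : (0 < size S)%N by case: (S) sS.
    by rewrite size_rem // -ltnS prednK.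
  exists T; split => //; rewrite hT; apply: conv_hull_eq => x xS.
    by apply: conv_hull_mem; rewrite (perm_mem (perm_to_rem sS)) inE xS orbT.
  move: xS; rewrite (perm_mem (perm_to_rem sS)) inE => /orP[/eqP -> //|xS].
  exact: conv_hull_mem.
exists S; split => // t tS; apply: extreme_step => // ht; apply: hno.
by exists t.
Qed.

End KM2.
Lemma ultra_lim (X : Type) (U : set_system X) (UU : UltraFilter U)
  (T : topologicalType) (f : X -> T) (K : set T) :
  compact K -> U (f @^-1` K) -> exists c, K c /\ f @ U --> c.
Proof.
move=> cK UK.
have [c [Kc clc]] := cK (f @ U) (fmap_proper_filter f (@ultra_proper _ _ UU)) UK.
exists c; split => // B nB /=.
have [//|hC] := in_ultra_setVsetC (f @^-1` B) UU.
exfalso; have [x [/= hx1 hx2]] := clc (~` B) B hC nB.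
exact: hx1.
Qed.

Section Compact.
Variables (R : realType) (k : nat).
Local Notation V := 'rV[R]_k.

Lemma conv_hull_compact (S : seq V) : compact (conv_hull S).
Proof.
move=> F FF FS.
have [G [GU FG]] := ultraFilterLemma FF.
pose W (z : V) : 'I_(size S) -> R := match pselect (conv_hull S z) with
  left h => projT1 (cid h) | right _ => fun=> 0 end.
have hW z : conv_hull S z -> [/\ forall i, 0 <= W z i, \sum_i W z i = 1 &
    z = \sum_i W z i *: S`_i].
  by move=> hz; rewrite /W; case: pselect => // h; case: (cid h) => w [? [? ?]].
have GS : G (conv_hull S) := FG _ FS.
have hlim : forall i, exists a : R, `[0, 1]%classic a /\ (fun z => W z i) @ G --> a.
  move=> i; apply: ultra_lim; first exact: segment_compact.
  apply: filterS GS => z /hW [w0 w1 _] /=; rewrite in_itv /= w0 /= -w1.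
  by rewrite (bigD1 i) //= lerDl sumr_ge0.
have [a ha] := choice hlim.
have a0 i : 0 <= a i.
  have [_ hi] := ha i; apply: (closed_cvg _ (@closed_ge _ 0) _ _ hi).
  by apply: filterS GS => z /hW [h _ _]; exact: h.
have hsum : (fun z => \sum_i W z i) @ G --> \sum_i a i.
  exact: (@cvg_big _ _ +%R 0 _ (@add_continuous _) _ G _ (fun i z => W z i) a _ (fun i _ => (ha i).2)).
have a1 : \sum_i a i = 1.
  apply: (cvg_unique (@norm_hausdorff _ _) hsum).
  apply: cvg_near_cst; apply: filterS GS => z /hW []; done.
set x := \sum_i a i *: S`_i.
have hx : (fun z => \sum_i W z i *: S`_i) @ G --> x.
  apply: (@cvg_big _ _ +%R 0 _ (@add_continuous _) _ G _ (fun i z => W z i *: S`_i) _ _) => i _.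
  apply: cvgZ; [exact: (ha i).2 | apply: cvg_cst].
have hid : (fun z => z) @ G --> x.
  apply: cvg_trans hx; apply: near_eq_cvg.
  by apply: filterS GS => z /hW [_ _ h]; exact/esym.
exists x; split; first by exists a.
move: hid; rewrite -[_ --> x]/([set y | G --> y] x) -ultra_cvg_clusterE.
exact: (cvg_cluster FG).
Qed.

Lemma conv_hull_closed (S : seq V) : closed (conv_hull S).
Proof. by apply: compact_closed; [exact: norm_hausdorff | exact: conv_hull_compact]. Qed.

End Compact.
Section Region.
Variables (R : realType) (k : nat).
Local Notation V := 'rV[R]_k.

Definition region (p : V) (e : R) (r : 'I_k * bool) (x : V) : Prop :=
  if r.2 then p ord0 r.1 + e <= x ord0 r.1 else x ord0 r.1 <= p ord0 r.1 - e.

Lemma region_cvx p e r : cvx (region p e r).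
Proof.
move=> x y t; rewrite /region; case: r.2 => hx hy /andP[t0 t1]; rewrite !mxE; nra.
Qed.

Lemma far_region (p x : V) e : 0 < e -> e <= `|p - x| -> exists r, region p e r x.
Proof.
move=> e0 hx.
have : mx_norm (p - x) != 0 by apply/eqP => h; move: hx; rewrite [`|_|]h; lra.
move=> /mx_norm_neq0 [[i0 j] /= hn].
have ei : i0 = ord0 by apply/val_inj; case: i0 hn => [[]].
rewrite ei in hn.
move: hx; rewrite [`|_|]hn !mxE ler_normr => /orP[h|h].
  by exists (j, false); rewrite /region /=; lra.
by exists (j, true); rewrite /region /=; lra.
Qed.

Lemma region_decomp (T : seq V) p e : 0 < e -> conv_hull T p ->
  (forall t, t \in T -> e <= `|p - t|) ->
  exists (mu : 'I_k * bool -> R) (c : 'I_k * bool -> V),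
  [/\ forall r, 0 <= mu r, \sum_r mu r = 1, \sum_r mu r *: c r = p,
      forall r, conv_hull T (c r) & forall r, mu r = 0 \/ region p e r (c r)].
Proof.
move=> e0 hpT; have [w [w0 [w1 hp]]] := hpT; move=> far.
have hreg : forall i : 'I_(size T), exists r, region p e r T`_i.
  by move=> i; apply: far_region e0 _; apply: far; apply: mem_nth.
have [rho hrho] := choice hreg.
pose mu r := \sum_(i | rho i == r) w i.
pose c r := if mu r == 0 then p else \sum_(i | rho i == r) (w i / mu r) *: T`_i.
have mu0 r : 0 <= mu r by apply: sumr_ge0.
have muc r : mu r *: c r = \sum_(i | rho i == r) w i *: T`_i.
  rewrite /c; case: eqP => [h|/eqP h].
    rewrite h scale0r big1 // => i /eqP hi.
    by rewrite (psumr_eq0P (P := fun i => rho i == r) (fun i _ => w0 i) h) ?hi ?eqxx // scale0r.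
  rewrite scaler_sumr; apply: eq_bigr => i _.
  by rewrite scalerA mulrCA divff // mulr1.
exists mu, c; split => //.
- by rewrite -w1 (partition_big rho predT).
- rewrite hp (partition_big rho predT) //; apply: eq_bigr => r _; exact: muc.
- move=> r; rewrite /c; case: eqP => // /eqP h.
  apply: (@convex_comb _ _ _ _ _ (fun i => rho i == r)).
  + exact: conv_hull_convex.
  + by move=> i _; rewrite divr_ge0.
  + by move=> i _; apply: conv_hull_mem; apply: mem_nth.
  + by rewrite -mulr_suml divff.
- move=> r; rewrite /c; case: eqP => [h|/eqP h]; [by left|right].
  apply: (@convex_comb _ _ _ _ _ (fun i => rho i == r)).
  + exact: region_cvx.
  + by move=> i _; rewrite divr_ge0.
  + by move=> i /eqP <-; apply: hrho.
  + by rewrite -mulr_suml divff.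
Qed.

End Region.
Section Final.
Variables (R : realType) (k : nat).
Local Notation V := 'rV[R]_k.

Lemma extreme_comb (P : set V) (I : finType) (a : I -> R) (b : I -> V) p r :
  cvx P -> extreme_point P p -> (forall i, 0 <= a i) -> \sum_i a i = 1 ->
  (forall i, P (b i)) -> \sum_i a i *: b i = p -> 0 < a r -> b r = p.
Proof.
move=> cP [Pp hp] a0 a1 Pb hab ar.
move: a1 hab; rewrite (bigD1 r) //= => a1; rewrite (bigD1 r) //= => hab.
set s := \sum_(i | i != r) a i in a1.
have s0 : 0 <= s by apply: sumr_ge0.
have [s00|sn0] := eqVneq s 0.
  have e0 : \sum_(i | i != r) a i *: b i = 0.
    by rewrite big1 // => i ir; rewrite (psumr_eq0P (fun i _ => a0 i) s00) ?scale0r.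
  by move: hab; rewrite e0 addr0 (_ : a r = 1) ?scale1r // -a1 s00 addr0.
have sp : 0 < s by rewrite lt_def sn0.
set z := \sum_(i | i != r) (a i / s) *: b i.
have Pz : P z.
  apply: convex_comb => // [i _|]; first by rewrite divr_ge0.
  by rewrite -mulr_suml divff.
have hs : 1 - a r = s by rewrite -a1 addrAC subrr add0r.
have hpz : p = a r *: b r + (1 - a r) *: z.
  rewrite -hab hs /z scaler_sumr; congr (_ + _); apply: eq_bigr => i _.
  by rewrite scalerA mulrCA divff // mulr1.
have ar1 : a r < 1 by rewrite -subr_gt0 hs.
have hz := hp (b r) z (a r) (Pb r) Pz (introT andP (conj ar ar1)) hpz.
by rewrite hpz -hz scalerBl scale1r addrC subrK.
Qed.

Lemma nearest (s : seq V) (f : V -> R) : s != [::] ->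
  exists t, t \in s /\ forall t', t' \in s -> f t <= f t'.
Proof.
elim: s => [//|x s IH] _.
have [->|sn] := eqVneq s [::].
  by exists x; split => [|t']; rewrite ?mem_head // inE => /eqP ->.
have [t [ts ht]] := IH sn.
have [fx|fx] := leP (f x) (f t).
  exists x; split; first exact: mem_head.
  move=> t'; rewrite inE => /orP[/eqP -> //|/ht]; exact: le_trans.
exists t; split; first by rewrite inE ts orbT.
move=> t'; rewrite inE => /orP[/eqP ->|/ht //]; exact: ltW.
Qed.

Lemma cvx_bigcap (P : nat -> set V) : (forall n, cvx (P n)) -> cvx (\bigcap_n P n).
Proof. by move=> h x y t hx hy ht n _; apply: h => //; [exact: hx | exact: hy]. Qed.

Lemma region_closed (p : V) e r : closed (region p e r).
Proof.
rewrite /region; case: r.2.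
  apply: (@preimage_closed _ _ (fun x : V => x ord0 r.1) [set y | p ord0 r.1 + e <= y]).
    by move=> x _; apply: coord_continuous.
  exact: closed_ge.
apply: (@preimage_closed _ _ (fun x : V => x ord0 r.1) [set y | y <= p ord0 r.1 - e]).
  by move=> x _; apply: coord_continuous.
exact: closed_le.
Qed.

End Final.
Theorem lemma1 (R : realType) (k : nat) (P : nat -> set 'rV[R]_k)
    (hpoly : forall n, is_polytope (P n))
    (hdec : forall n, P n.+1 `<=` P n)
    (p : 'rV[R]_k)
    (hp : extreme_point (\bigcap_n P n) p) :
  exists q : nat -> 'rV[R]_k,
    (forall n, extreme_point (P n) (q n)) /\ q @ \oo --> (p : 'rV[R]_k).
Proof.
have [S hS] := choice hpoly.
have [T hT] := choice (fun n => krein_milman (S n)).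
have hPT n : P n = conv_hull (T n) by rewrite (hT n).1 (hS n).
have hpP n : P n p by exact: hp.1 n I.
have hmono m n : (m <= n)%N -> P n `<=` P m.
  elim: n => [|n IH]; first by rewrite leqn0 => /eqP ->.
  rewrite leq_eqVlt => /orP[/eqP -> //|]; rewrite ltnS => /IH h x /hdec; exact: h.
have Tne n : T n != [::].
  apply/eqP => h; have := hpP n; rewrite hPT h => -[w [_ [w1 _]]].
  by move: w1; rewrite big_ord0 => /eqP; rewrite eq_sym oner_eq0.
have [q hq] := choice (fun n => nearest (fun t => `|p - t|) (Tne n)).
exists q; split.
  by move=> n; rewrite hPT; apply: (hT n).2; exact: (hq n).1.
apply/cvgrPdist_lt => e e0.
apply: contrapT => hne.
have hbad : forall N, exists n, (N <= n)%N /\ e <= `|p - q n|.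
  move=> N; apply: contrapT => hN; apply: hne; exists N => // n /= hn.
  rewrite ltNge; apply/negP => h; apply: hN; by exists n.
have [phi hphi] := choice hbad.
have hdat N : exists mc : ('I_k * bool -> R) * ('I_k * bool -> 'rV[R]_k),
  [/\ forall r, 0 <= mc.1 r, \sum_r mc.1 r = 1, \sum_r mc.1 r *: mc.2 r = p,
      forall r, conv_hull (T (phi N)) (mc.2 r) &
      forall r, mc.1 r = 0 \/ region p e r (mc.2 r)].
  have far : forall t, t \in T (phi N) -> e <= `|p - t|.
    by move=> t tT; apply: le_trans (hphi N).2 _; apply: (hq (phi N)).2.
  have [mu [c h]] := region_decomp e0 (eq_ind _ (fun X => X p) (hpP (phi N)) _ (hPT _)) far.
  by exists (mu, c).
have [mc hmc] := choice hdat.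
have [U [UU hU]] := ultraFilterLemma (@eventually_filter).
have hlimA : forall r, exists a : R, `[0, 1]%classic a /\ (fun N => (mc N).1 r) @ U --> a.
  move=> r; apply: ultra_lim; first exact: segment_compact.
  apply: filterE => N /=; have [m0 m1 _ _ _] := hmc N.
  by rewrite in_itv /= m0 /= -m1 (bigD1 r) //= lerDl sumr_ge0.
have [a ha] := choice hlimA.
have hlimB : forall r, exists b, P 0 b /\ (fun N => (mc N).2 r) @ U --> b.
  move=> r; apply: ultra_lim; first by rewrite (hS 0); exact: conv_hull_compact.
  apply: filterE => N /=; have [_ _ _ m3 _] := hmc N.
  by apply: (hmono 0 (phi N)) => //; rewrite hPT; exact: m3.
have [b hb] := choice hlimB.
have a0 r : 0 <= a r.
  apply: (closed_cvg _ (@closed_ge _ 0) _ _ (ha r).2).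
  by apply: filterE => N; have [m0 _ _ _ _] := hmc N; exact: m0.
have hsum : (fun N => \sum_r (mc N).1 r) @ U --> \sum_r a r.
  exact: (@cvg_big _ _ +%R 0 _ (@add_continuous _) _ U _ (fun r N => (mc N).1 r) a _ (fun r _ => (ha r).2)).
have a1 : \sum_r a r = 1.
  apply: (cvg_unique (@norm_hausdorff _ _) hsum).
  by apply: cvg_near_cst; apply: filterE => N; have [_ m1 _ _ _] := hmc N; exact: m1.
have hsum2 : (fun N => \sum_r (mc N).1 r *: (mc N).2 r) @ U --> \sum_r a r *: b r.
  apply: (@cvg_big _ _ +%R 0 _ (@add_continuous _) _ U _ (fun r N => (mc N).1 r *: (mc N).2 r) _ _) => r _.
  by apply: cvgZ; [exact: (ha r).2 | exact: (hb r).2].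
have ab : \sum_r a r *: b r = p.
  apply: (cvg_unique (@norm_hausdorff _ _) hsum2).
  by apply: cvg_near_cst; apply: filterE => N; have [_ _ m2 _ _] := hmc N; exact: m2.
have evm m : \forall N \near U, (m <= N)%N by apply: hU; exists m.
have bP r m : P m (b r).
  apply: (closed_cvg _ _ _ _ (hb r).2); first by rewrite hPT; exact: conv_hull_closed.
  apply: filterS (evm m) => N hN; have [_ _ _ m3 _] := hmc N.
  apply: (hmono m (phi N)); first exact: leq_trans hN (hphi N).1.
  by rewrite hPT; exact: m3.
have [r ar] : exists r, 0 < a r.
  apply: contrapT => hn; have : \sum_r a r = 0.
    rewrite big1 // => r _; apply/eqP; rewrite eq_le a0 andbT leNgt; apply/negP => h.
    by apply: hn; exists r.
  by rewrite a1 => /eqP; rewrite oner_eq0.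
have evpos : \forall N \near U, 0 < (mc N).1 r.
  by move: (ha r).2 => /cvgr_gt; apply.
have breg : region p e r (b r).
  apply: (closed_cvg _ _ _ _ (hb r).2); first exact: region_closed.
  apply: filterS evpos => N hN; have [_ _ _ _ m4] := hmc N.
  by case: (m4 r) => // h; rewrite h ltxx in hN.
have cP : cvx (\bigcap_n P n).
  by apply: cvx_bigcap => n; rewrite hPT; exact: conv_hull_convex.
have hbr : b r = p.
  by apply: (extreme_comb cP hp a0 a1 _ ab ar) => i n _; exact: bP.
by move: breg; rewrite hbr /region; case: r.2; lra.
Qed.
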